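(* Let $n\ge r\ge1$, let $\mathcal{O}\subset\mathbb{R}^{n\times r}$ be an open set containing ${\rm St}(n,r)$, and let $f:\mathcal{O}\to\mathbb{R}$ be continuously differentiable; let $L_f$ be a Lipschitz constant of $f$ on ${\rm St}(n,r)$. Consider problem (P): $\min_{X\in\mathcal{S}_{+}^{n,r}} f(X)$ with optimal value $f^*$. Suppose that, in the case $n>r>1$, every global minimizer of (P) has no zero rows. Then: 1. If $n=r$ or $n>r=1$, let $\kappa'>0$ be a constant such that ${\rm dist}(Z,\mathcal{S}_{+}^{n,r})\le\kappa'{\rm dist}(Z,\mathbb{R}_{+}^{n\times r})$ for all $Z\in{\rm St}(n,r)$ (such a constant exists). Then $f(X)-f^*+\kappa' L_f\vartheta(X)\ge0$ for all $X\in{\rm St}(n,r)$. 2. If $n>r>1$, then for every global minimizer $X^*$ of (P) there exists $\delta>0$ such that for all $\epsilon\ge0$ and all $X$ with $\|X-X^*\|_F\le\delta$ and $X\in\mathcal{F}_\epsilon:=\{X\in{\rm St}(n,r):\vartheta(X)=\epsilon\}$, one has $f(X)-f^*+\kappa L_f\vartheta(X)\ge0$, where $\kappa:=\frac{2.1\sqrt{r}[1+3r(n-r)]}{X^*_{i^*j^*}}$ with $X^*_{i^*j^*}$ the smallest nonzero entry of $X^*$. Consequently, there exists $\overline{\rho}>0$ such that for every $\rho\ge\overline{\rho}$ the penalty problem $\min_{X\in{\rm St}(n,r)}\{f(X)+\rho\vartheta(X)\}$ has the same set of global optimal solutions as (P).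
   Context: ${\rm St}(n,r):=\{X\in\mathbb{R}^{n\times r}: X^\top X=I_r\}$, $\mathbb{R}_{+}^{n\times r}$ is the cone of entrywise nonnegative matrices, $\mathcal{S}_{+}^{n,r}:=\mathbb{R}_{+}^{n\times r}\cap{\rm St}(n,r)$, ${\rm dist}$ is the Frobenius-norm distance. $\vartheta(X):=\langle E,\max(0,-X)\rangle=\sum_{i,j}\max(0,-X_{ij})$ is the elementwise $\ell_1$-norm distance from $X$ to $\mathbb{R}_{+}^{n\times r}$ ($E$ the all-ones matrix, $\max$ entrywise). *)

(* Defs.v *)
From HB Require Import structures.
From mathcomp Require Import all_boot all_order all_algebra.
From mathcomp Require Import all_classical all_reals all_analysis.
Set Implicit Arguments. Unset Strict Implicit. Unset Printing Implicit Defensive.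
Import Order.TTheory GRing.Theory Num.Theory.
Import numFieldNormedType.Exports.
Local Open Scope classical_set_scope.
Local Open Scope ring_scope.

Section Defs.
Variable R : realType.
Variables n r : nat.

Definition frob (X : 'M[R]_(n, r)) : R :=
  Num.sqrt (\sum_(i < n) \sum_(j < r) X i j ^+ 2).

Definition Stiefel : set 'M[R]_(n, r) := [set X | X^T *m X = 1%:M].

Definition Rplus : set 'M[R]_(n, r) := [set X | forall i j, 0 <= X i j].

Definition Splus : set 'M[R]_(n, r) := Rplus `&` Stiefel.

Definition dist (Z : 'M[R]_(n, r)) (S : set 'M[R]_(n, r)) : R :=
  inf [set frob (Z - Y) | Y in S].

Definition vartheta (X : 'M[R]_(n, r)) : R :=
  \sum_(i < n) \sum_(j < r) Num.max 0 (- X i j).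

Definition global_min (g : 'M[R]_(n, r) -> R) (S : set 'M[R]_(n, r))
  (X : 'M[R]_(n, r)) : Prop :=
  S X /\ forall Y, S Y -> g X <= g Y.

Definition opt_value (g : 'M[R]_(n, r) -> R) (S : set 'M[R]_(n, r)) : R :=
  inf [set g X | X in S].

Definition min_nonzero_entry (X : 'M[R]_(n, r)) : R :=
  inf [set x | exists i j, X i j != 0 /\ x = X i j].

Definition no_zero_rows (X : 'M[R]_(n, r)) : Prop :=
  forall i : 'I_n, exists j : 'I_r, X i j != 0.

End Defs.

Arguments Stiefel R n r : clear implicits.
Arguments Rplus R n r : clear implicits.
Arguments Splus R n r : clear implicits.

(* Main.v *)
Require Import Defs.
From HB Require Import structures.
From mathcomp Require Import all_boot all_order all_algebra.
From mathcomp Require Import all_classical all_reals all_analysis.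
From mathcomp Require Import ring lra.
Import Order.TTheory GRing.Theory Num.Theory.
Import numFieldNormedType.Exports.
Local Open Scope classical_set_scope.
Local Open Scope ring_scope.

Section Helpers.
Set Implicit Arguments.
Unset Strict Implicit.

Lemma sq_sum_le (R : realType) (I : finType) (F : I -> R) :
  (forall i, 0 <= F i) -> \sum_i F i ^+ 2 <= (\sum_i F i) ^+ 2.
Proof.
move=> F0; rewrite expr2 mulr_suml; apply: ler_sum => i _.
rewrite expr2; apply: ler_wpM2l => //.
by rewrite (bigD1 i) //= lerDl sumr_ge0.
Qed.

Lemma frob_ge0 (R : realType) n r (A : 'M[R]_(n, r)) : 0 <= frob A.
Proof. exact: sqrtr_ge0. Qed.

Lemma frob_le_l1 (R : realType) n r (A : 'M[R]_(n, r)) :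
  frob A <= \sum_i \sum_j `|A i j|.
Proof.
rewrite /frob -(@ger0_norm _ (\sum_i \sum_j `|A i j|)); last first.
  by apply: sumr_ge0 => i _; apply: sumr_ge0.
rewrite -sqrtr_sqr; apply: ler_wsqrtr.
apply: (le_trans _ (@sq_sum_le R _ (fun i => \sum_j `|A i j|) _)); last first.
  by move=> i; apply: sumr_ge0.
apply: ler_sum => i _.
apply: (le_trans _ (@sq_sum_le R _ (fun j => `|A i j|) _)) => //.
by apply: ler_sum => j _; rewrite real_normK // num_real.
Qed.

Lemma entry_le_frob (R : realType) n r (A : 'M[R]_(n, r)) i j :
  `|A i j| <= frob A.
Proof.
rewrite /frob -sqrtr_sqr; apply: ler_wsqrtr.
rewrite (bigD1 i) //= (bigD1 j) //= -addrA lerDl.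
apply: addr_ge0; first by apply: sumr_ge0 => k _; rewrite sqr_ge0.
by apply: sumr_ge0 => k _; apply: sumr_ge0 => l _; rewrite sqr_ge0.
Qed.

Lemma tmulE (R : realType) n r (X : 'M[R]_(n, r)) j k :
  (X^T *m X) j k = \sum_i X i j * X i k.
Proof. by rewrite mxE; apply: eq_bigr => i _; rewrite mxE. Qed.

Lemma stiefel_col (R : realType) n r (X : 'M[R]_(n, r)) j k :
  Stiefel R n r X -> \sum_i X i j * X i k = (j == k)%:R.
Proof. by move=> hX; rewrite -tmulE hX mxE. Qed.

Lemma stiefel_col1 (R : realType) n r (X : 'M[R]_(n, r)) j :
  Stiefel R n r X -> \sum_i X i j ^+ 2 = 1.
Proof.
move=> hX; transitivity (\sum_i X i j * X i j).
  by apply: eq_bigr => i _; rewrite expr2.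
by rewrite stiefel_col // eqxx.
Qed.

Lemma stiefel_entry (R : realType) n r (X : 'M[R]_(n, r)) i j :
  Stiefel R n r X -> `|X i j| <= 1.
Proof.
move=> hX; have h := stiefel_col1 j hX.
have : X i j ^+ 2 <= 1.
  rewrite -h (bigD1 i) //= lerDl; apply: sumr_ge0 => k _; exact: sqr_ge0.
rewrite -real_normK ?num_real // => h2; have := normr_ge0 (X i j); nra.
Qed.

Definition X0 (R : realType) n r : 'M[R]_(n, r) :=
  \matrix_(i, j) ((i : nat) == j)%:R.

Lemma X0_stiefel (R : realType) n r : (r <= n)%N -> Stiefel R n r (X0 R n r).
Proof.
move=> rn; apply/matrixP => j k; rewrite tmulE mxE.
rewrite (bigD1 (widen_ord rn j)) //= big1 ?addr0.
  by rewrite !mxE /= eqxx mul1r.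
move=> i /eqP hi; rewrite !mxE.
case: eqP => [hij|]; last by rewrite mul0r.
by exfalso; apply: hi; apply: val_inj; rewrite /= hij.
Qed.

Lemma X0_splus (R : realType) n r : (r <= n)%N -> Splus R n r (X0 R n r).
Proof.
move=> rn; split; last exact: X0_stiefel.
by move=> i j; rewrite mxE ler0n.
Qed.

Lemma pn_facts (R : realType) (x : R) :
  [/\ 0 <= Num.max x 0, 0 <= Num.max 0 (- x), x = Num.max x 0 - Num.max 0 (- x),
      `|x| = Num.max x 0 + Num.max 0 (- x) & Num.max x 0 * Num.max 0 (- x) = 0].
Proof.
rewrite /Num.Def.maxr oppr_gt0; have [h|h] := ltrP x 0.
  by split; [lra|lra|lra|rewrite ltr0_norm //; lra|lra].
by split; [lra|lra|lra|rewrite ger0_norm //; lra|lra].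
Qed.

Lemma neg_le_d (R : realType) (x a d : R) :
  0 <= a -> `|x - a| <= d -> Num.max 0 (- x) <= d.
Proof.
move=> a0 /ler_normlP [h1 h2]; rewrite /Num.Def.maxr.
case: ifP => _; lra.
Qed.

Lemma sum_const_ord (R : realType) m (c : R) : \sum_(i < m) c = m%:R * c.
Proof. by rewrite sumr_const card_ord mulr_natl. Qed.

Lemma construct (R : realType) n r (X Xs : 'M[R]_(n, r)) (c : 'I_n -> 'I_r) (d : R) :
  Stiefel R n r X -> (forall i k, 0 <= Xs i k) ->
  (forall i k, k != c i -> Xs i k = 0) ->
  0 < d -> n%:R * d <= 1/20 -> d <= 1 ->
  (forall i k, `|X i k - Xs i k| <= d) ->
  exists Y, Splus R n r Y /\
    frob (X - Y) <= 11/10 * (vartheta X + \sum_i \sum_(k | k != c i) `|X i k|).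
Proof.
move=> hX hXs0 hXsc d0 hnd hd1 hXd.
pose pos := fun x : R => Num.max x 0.
pose neg := fun x : R => Num.max 0 (- x).
pose E i k := if k == c i then neg (X i k) else `|X i k|.
pose F i k := if k == c i then neg (X i k) ^+ 2 else X i k ^+ 2.
pose G i k := if k == c i then pos (X i k) ^+ 2 else 0.
pose w k := \sum_i F i k.
pose nu k := Num.sqrt (\sum_i G i k).
have hn0 : 0 <= n%:R :> R by rewrite ler0n.
have hE0 : forall i k, 0 <= E i k.
  move=> i k; rewrite /E; case: ifP => _ //.
  by have [] := pn_facts (X i k).
have hEd : forall i k, E i k <= d.
  move=> i k; rewrite /E; case: ifP => [_|/negbT hk].
    exact: (neg_le_d (hXs0 i k) (hXd i k)).
  by have := hXd i k; rewrite hXsc // subr0.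
have hF0 : forall i k, 0 <= F i k.
  by move=> i k; rewrite /F; case: ifP => _; apply: sqr_ge0.
have hFE : forall i k, F i k <= d * E i k.
  move=> i k; have := hEd i k; have := hE0 i k; rewrite /F /E.
  case: ifP => _ h1 h2; first by rewrite expr2; apply: ler_wpM2r.
  by rewrite -real_normK ?num_real // expr2; apply: ler_wpM2r.
have hGF : forall i k, G i k + F i k = X i k ^+ 2.
  move=> i k; rewrite /G /F; case: ifP => _; last by rewrite add0r.
  have [h1 h2 h3 h4 h5] := pn_facts (X i k).
  rewrite {3}h3 /pos /neg; set p := Num.max _ _ in h1 h2 h3 h4 h5 *.
  set m := Num.max _ _ in h1 h2 h3 h4 h5 *.
  rewrite !expr2; nra.
have hG0 : forall i k, 0 <= G i k.
  by move=> i k; rewrite /G; case: ifP => _ //; apply: sqr_ge0.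
have hcol : forall k, \sum_i G i k + w k = 1.
  move=> k; rewrite /w -big_split /= -(stiefel_col1 k hX).
  by apply: eq_bigr => i _; rewrite hGF.
have hw0 : forall k, 0 <= w k by move=> k; apply: sumr_ge0 => i _.
have hwd : forall k, w k <= 1/20 * d.
  move=> k; apply: (@le_trans _ _ (\sum_(i < n) (d * d))).
    apply: ler_sum => i _; apply: (le_trans (hFE i k)).
    by apply: ler_wpM2l; [apply: ltW|].
  rewrite sum_const_ord; nra.
have hnu2 : forall k, nu k ^+ 2 = 1 - w k.
  move=> k; rewrite sqr_sqrtr; last by apply: sumr_ge0.
  by have := hcol k; lra.
have hnu0 : forall k, 0 <= nu k by move=> k; apply: sqrtr_ge0.
have hnu12 : forall k, 1/2 <= nu k /\ nu k <= 1.
  move=> k; have := hnu2 k; have := hwd k; have := hw0 k; have := hnu0 k.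
  rewrite expr2 => *; split; nra.
pose Y := \matrix_(i, k) (if k == c i then pos (X i k) / nu k else 0).
exists Y; split.
  split.
    move=> i k; rewrite mxE; case: ifP => _ //.
    by apply: divr_ge0 => //; have [] := pn_facts (X i k).
  apply/matrixP => j l; rewrite tmulE mxE.
  case: (eqVneq j l) => [<-|hjl].
    rewrite /=.
    transitivity (\sum_i G i j / nu j ^+ 2).
      apply: eq_bigr => i _; rewrite !mxE /G; case: ifP => _; last by rewrite !mul0r.
      by rewrite expr2 expr2; field; have [] := hnu12 j; lra.
    rewrite -mulr_suml.
    have -> : \sum_i G i j = nu j ^+ 2.
      by rewrite sqr_sqrtr //; apply: sumr_ge0 => i _.
    by apply: divff; rewrite expf_neq0 //; have [] := hnu12 j; lra.
  rewrite /= big1 // => i _; rewrite !mxE.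
  case: eqP => [hj|_]; last by rewrite mul0r.
  case: eqP => [hl|_]; last by rewrite mulr0.
  by move: hjl; rewrite hj hl eqxx.
apply: (le_trans (frob_le_l1 _)).
have hent : forall i k, `|(X - Y) i k| <= E i k + 2 * w k.
  move=> i k; rewrite !mxE /E; case: ifP => _; last first.
    by rewrite subr0 lerDl; have := hw0 k; lra.
  have [h1 h2 h3 h4 h5] := pn_facts (X i k).
  have hx1 := stiefel_entry i k hX.
  have [hn1 hn2] := hnu12 k.
  have hnu2k := hnu2 k; have hwk := hw0 k.
  rewrite /pos /neg; set p := Num.max _ _ in h1 h2 h3 h4 h5 *.
  set m := Num.max _ _ in h1 h2 h3 h4 h5 *.
  set t := (nu k)^-1.
  have ht : t * nu k = 1 by rewrite mulVf //; lra.
  have ht2 : t <= 2 by nra.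
  have ht1 : 1 <= t by nra.
  have hp1 : p <= 1 by rewrite h4 in hx1; lra.
  have hx : X i k - p / nu k = p - m - p * t by rewrite {1}h3.
  rewrite hx; apply/ler_normlP; split.
    have : t - 1 <= 2 * w k.
      rewrite expr2 in hnu2k; nra.
    nra.
  have : t - 1 <= 2 * w k.
    rewrite expr2 in hnu2k; nra.
  nra.
apply: (@le_trans _ _ (\sum_i \sum_k (E i k + 2 * w k))).
  by apply: ler_sum => i _; apply: ler_sum => k _; apply: hent.
have hT : \sum_i \sum_k E i k <= vartheta X + \sum_i \sum_(k | k != c i) `|X i k|.
  rewrite /vartheta -big_split /=; apply: ler_sum => i _.
  rewrite (bigD1 (c i)) //= /E eqxx.
  rewrite (eq_bigr (fun k => `|X i k|)); last by move=> k /negbTE ->.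
  rewrite lerD2r (bigD1 (c i)) //= lerDl.
  by apply: sumr_ge0 => k _; have [] := pn_facts (X i k).
have hT0 : 0 <= \sum_i \sum_k E i k.
  by apply: sumr_ge0 => i _; apply: sumr_ge0 => k _.
have hW : \sum_k w k <= d * \sum_i \sum_k E i k.
  rewrite /w exchange_big /= mulr_sumr; apply: ler_sum => i _.
  rewrite mulr_sumr; apply: ler_sum => k _; exact: hFE.
rewrite (eq_bigr (fun i => \sum_k E i k + \sum_k 2 * w k)); last first.
  by move=> i _; rewrite big_split.
rewrite big_split /= sum_const_ord -mulr_sumr.
set T := \sum_i \sum_k E i k in hT hT0 hW *.
set Wt := \sum_k w k in hW *.
have : n%:R * (2 * Wt) <= T / 10.
  have : n%:R * Wt <= n%:R * (d * T) by apply: ler_wpM2l.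
  nra.
lra.
Qed.

Lemma rowid (R : realType) n r (X : 'M[R]_(n, r)) :
  Stiefel R n r X -> \sum_i (\sum_k X i k) ^+ 2 = \sum_i \sum_k X i k ^+ 2.
Proof.
move=> hX.
have -> : \sum_i (\sum_k X i k) ^+ 2 = \sum_k \sum_l \sum_i X i k * X i l.
  rewrite (eq_bigr (fun i => \sum_k \sum_l X i k * X i l)); last first.
    by move=> i _; rewrite expr2 mulr_suml; apply: eq_bigr => k _; rewrite mulr_sumr.
  rewrite exchange_big /=; apply: eq_bigr => k _; exact: exchange_big.
rewrite [RHS]exchange_big /=; apply: eq_bigr => k _.
rewrite (eq_bigr (fun l => (k == l)%:R)); last by move=> l _; apply: stiefel_col.
rewrite (bigD1 k) //= eqxx big1 ?addr0; last by move=> l /negbTE; rewrite eq_sym => ->.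
by rewrite (stiefel_col1 k hX).
Qed.

Lemma qbound (R : realType) n r (X Xs : 'M[R]_(n, r)) (c : 'I_n -> 'I_r) (m d : R) :
  Stiefel R n r X -> (forall i k, k != c i -> Xs i k = 0) ->
  (forall i, m <= Xs i (c i)) -> 0 < m -> 0 < d -> d <= m / 20 ->
  (forall i k, `|X i k - Xs i k| <= d) ->
  m * (\sum_i \sum_(k | k != c i) `|X i k|) <= 22/10 * vartheta X.
Proof.
move=> hX hXsc hm m0 d0 hdm hXd.
pose neg := fun x : R => Num.max 0 (- x).
pose a i := X i (c i).
pose o i := \sum_(k | k != c i) X i k.
pose os i := \sum_(k | k != c i) X i k ^+ 2.
pose Qi i := \sum_(k | k != c i) `|X i k|.
pose Ni i := \sum_(k | k != c i) neg (X i k).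
have hoff : forall i k, k != c i -> `|X i k| <= d.
  by move=> i k hk; have := hXd i k; rewrite hXsc // subr0.
have hrow : forall i, \sum_k X i k = a i + o i.
  by move=> i; rewrite (bigD1 (c i)).
have hrow2 : forall i, \sum_k X i k ^+ 2 = a i ^+ 2 + os i.
  by move=> i; rewrite (bigD1 (c i)).
have hid := rowid hX.
rewrite (eq_bigr (fun i => (a i + o i) ^+ 2)) in hid; last by move=> i _; rewrite hrow.
rewrite [X in _ = X](eq_bigr (fun i => a i ^+ 2 + os i)) in hid; last by move=> i _; rewrite hrow2.
have hS : 2 * \sum_i a i * o i + \sum_i o i ^+ 2 = \sum_i os i.
  have : \sum_i (a i + o i) ^+ 2 = \sum_i a i ^+ 2 + (2 * \sum_i a i * o i + \sum_i o i ^+ 2).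
    rewrite mulr_sumr -!big_split /=; apply: eq_bigr => i _; ring.
  rewrite hid big_split /= => /addrI; done.
have hS3 : 0 <= \sum_i o i ^+ 2 by apply: sumr_ge0 => i _; apply: sqr_ge0.
have hos : forall i, os i <= d * Qi i.
  move=> i; rewrite /os /Qi mulr_sumr; apply: ler_sum => k hk.
  rewrite -real_normK ?num_real // expr2; apply: ler_wpM2r => //; exact: hoff.
have hQN : forall i, Qi i = o i + 2 * Ni i.
  move=> i; rewrite /Qi /o /Ni mulr_sumr -big_split /=; apply: eq_bigr => k _.
  have [h1 h2 h3 h4 h5] := pn_facts (X i k); rewrite /neg; lra.
have hNi0 : forall i, 0 <= Ni i.
  by move=> i; apply: sumr_ge0 => k _; have [] := pn_facts (X i k).
have hQi0 : forall i, 0 <= Qi i by move=> i; apply: sumr_ge0 => k _.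
have ha1 : forall i, a i <= 1.
  by move=> i; have := stiefel_entry i (c i) hX; rewrite /a => /ler_normlP [_ ->].
have ham : forall i, m - d <= a i.
  move=> i; have := hXd i (c i); have := hm i; rewrite /a => ? /ler_normlP [? ?]; lra.
have hNth : \sum_i Ni i <= vartheta X.
  rewrite /vartheta; apply: ler_sum => i _; rewrite (bigD1 (c i)) //= lerDr.
  by have [] := pn_facts (X i (c i)).
have hup : \sum_i a i * Qi i <= \sum_i a i * o i + 2 * \sum_i Ni i.
  rewrite mulr_sumr -big_split /=; apply: ler_sum => i _; rewrite hQN.
  have := ha1 i; have := hNi0 i; nra.
have hlow : (m - d) * \sum_i Qi i <= \sum_i a i * Qi i.
  rewrite mulr_sumr; apply: ler_sum => i _; apply: ler_wpM2r => //.
have hosQ : \sum_i os i <= d * \sum_i Qi i.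
  rewrite mulr_sumr; apply: ler_sum => i _; exact: hos.
have -> : \sum_i \sum_(k | k != c i) `|X i k| = \sum_i Qi i by [].
set Q := \sum_i Qi i in hlow hosQ *.
have hQ0 : 0 <= Q by apply: sumr_ge0 => i _.
have : d * Q <= m / 20 * Q by apply: ler_wpM2r.
nra.
Qed.


Lemma vartheta_ge0 (R : realType) n r (X : 'M[R]_(n, r)) : 0 <= vartheta X.
Proof.
by apply: sumr_ge0 => i _; apply: sumr_ge0 => k _; have [] := pn_facts (X i k).
Qed.

Lemma col_unique (R : realType) n r (Xs : 'M[R]_(n, r)) i j k :
  Splus R n r Xs -> Xs i j != 0 -> Xs i k != 0 -> j = k.
Proof.
move=> [h0 hS] hj hk; apply/eqP; apply/negP => /negP hjk.
have := stiefel_col j k hS; rewrite (negbTE hjk) /= => h.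
have := psumr_eq0P _ h => /(_ _) H.
have : Xs i j * Xs i k = 0 by apply: H => // l _; apply: mulr_ge0.
by apply/eqP; rewrite mulf_eq0 negb_or hj hk.
Qed.

Lemma loc_nz (R : realType) n r (Xs : 'M[R]_(n, r)) :
  (0 < n)%N -> Splus R n r Xs -> no_zero_rows Xs ->
  0 < min_nonzero_entry Xs /\ min_nonzero_entry Xs <= 1 /\
  exists d, 0 < d /\ forall X, Stiefel R n r X ->
    (forall i k, `|X i k - Xs i k| <= d) ->
    exists Y, Splus R n r Y /\ min_nonzero_entry Xs * frob (X - Y) <= 4 * vartheta X.
Proof.
move=> n0 hXs nzr.
have [c hc] := choice nzr.
have hsc : forall i k, k != c i -> Xs i k = 0.
  move=> i k hk; apply/eqP; apply/negP => /negP hk'.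
  by move: hk; rewrite (col_unique hXs hk' (hc i)) eqxx.
have hXs0 : forall i k, 0 <= Xs i k by case: hXs.
have hpos : forall i, 0 < Xs i (c i) by move=> i; rewrite lt0r hc hXs0.
have hle1 : forall i k, Xs i k <= 1.
  by move=> i k; have := stiefel_entry i k hXs.2 => /ler_normlP [].
pose mm := \prod_i Xs i (c i).
have mm0 : 0 < mm by apply: prodr_gt0 => i _.
have mmle : forall i, mm <= Xs i (c i).
  move=> i; rewrite /mm (bigD1 i) //= ger_pMr //.
  by apply: prodr_ile1 => l _; rewrite hXs0 hle1.
set S := [set x | exists i j, Xs i j != 0 /\ x = Xs i j].
have lbS : forall x, S x -> mm <= x.
  move=> x [i [j [hij ->]]]; have := col_unique hXs hij (hc i) => ->; exact: mmle.
pose i0 : 'I_n := Ordinal n0.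
have neS : S !=set0 by exists (Xs i0 (c i0)); exists i0, (c i0); split.
have hmpos : mm <= min_nonzero_entry Xs by apply: lb_le_inf.
have hmle : forall i, min_nonzero_entry Xs <= Xs i (c i).
  move=> i; apply: (ge_inf (E := S)); first by exists mm.
  by exists i, (c i); split.
set m := min_nonzero_entry Xs in hmpos hmle *.
have m0 : 0 < m by apply: lt_le_trans hmpos.
have m1 : m <= 1 by apply: (le_trans (hmle i0)).
split => //; split => //.
have hn : 1 <= n%:R :> R by rewrite ler1n.
pose d := m / (20 * n%:R).
have hd : d * (20 * n%:R) = m by rewrite /d mulfVK //; apply: lt0r_neq0; lra.
have d0 : 0 < d by rewrite /d divr_gt0 //; lra.
exists d; split => // X hX hXd.
have hnd : n%:R * d <= 1/20 by nra.
have hd1 : d <= 1 by nra.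
have hdm : d <= m / 20 by nra.
have [Y [hY hfr]] := construct hX hXs0 hsc d0 hnd hd1 hXd.
exists Y; split => //.
have hq := qbound hX hsc hmle m0 d0 hdm hXd.
have hth := vartheta_ge0 X.
set Q := \sum_i \sum_(k | k != c i) `|X i k| in hfr hq.
have hmf : m * frob (X - Y) <= m * (11 / 10 * (vartheta X + Q)) by apply: ler_wpM2l; lra.
nra.
Qed.


Lemma loc_r1 (R : realType) n r (Xs : 'M[R]_(n, r)) :
  (0 < n)%N -> r = 1%N -> Splus R n r Xs ->
  exists d, 0 < d /\ forall X, Stiefel R n r X ->
    (forall i k, `|X i k - Xs i k| <= d) ->
    exists Y, Splus R n r Y /\ frob (X - Y) <= 11/10 * vartheta X.
Proof.
move=> n0 r1 hXs; subst r.
have hXs0 : forall i k, 0 <= Xs i k by case: hXs.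
pose c := fun _ : 'I_n => (ord0 : 'I_1).
have hsc : forall i k, k != c i -> Xs i k = 0 by move=> i k; rewrite ord1 eqxx.
have hn : 1 <= n%:R :> R by rewrite ler1n.
pose d : R := 1 / (20 * n%:R).
have hd : d * (20 * n%:R) = 1 by rewrite /d mulfVK //; apply: lt0r_neq0; lra.
have d0 : 0 < d by rewrite /d divr_gt0 //; lra.
exists d; split => // X hX hXd.
have hnd : n%:R * d <= 1/20 by nra.
have hd1 : d <= 1 by nra.
have [Y [hY hfr]] := construct hX hXs0 hsc d0 hnd hd1 hXd.
exists Y; split => //.
rewrite big1 ?addr0 in hfr => // i _.
by rewrite big_pred0 // => k; rewrite ord1 eqxx.
Qed.

Lemma frob_sub_le (R : realType) n r (A B : 'M[R]_(n, r)) (e : R) :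
  (forall i k, `|A i k - B i k| <= e) -> frob (A - B) <= (n * r)%:R * e.
Proof.
move=> h; apply: (le_trans (frob_le_l1 _)).
apply: (@le_trans _ _ (\sum_(i < n) \sum_(k < r) e)).
  by apply: ler_sum => i _; apply: ler_sum => k _; rewrite !mxE.
by rewrite sum_const_ord sum_const_ord mulrA natrM.
Qed.

Lemma stiefelN (R : realType) n r (X : 'M[R]_(n, r)) :
  Stiefel R n r X -> Stiefel R n r (- X).
Proof.
move=> hX; rewrite /Stiefel /= -hX; apply/matrixP => j k; rewrite !tmulE.
by apply: eq_bigr => i _; rewrite !mxE mulrNN.
Qed.

Lemma seq_cluster (R : realType) (p : nat) (v : nat -> 'rV[R]_p) :
  (forall k i, [set` `[(-1:R), 1]] (v k 0 i)) ->
  exists w : 'rV[R]_p, forall e : R, 0 < e -> forall N : nat,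
    exists k, (N <= k)%N /\ forall i, `|w 0 i - v k 0 i| < e.
Proof.
move=> hv.
have cK : compact [set u : 'rV[R]_p | forall i, [set` `[(-1:R), 1]] (u ord0 i)].
  by apply: (@rV_compact _ p (fun=> [set` `[(-1:R), 1]])) => i; exact: segment_compact.
have FK : (v @ \oo) [set u : 'rV[R]_p | forall i, [set` `[(-1:R), 1]] (u ord0 i)].
  exact: (@filterE nat \oo _ (fun k => forall i, [set` `[(-1:R), 1]] (v k ord0 i)) (fun k => hv k)).
have [w [_ clw]] := cK _ _ FK.
exists w => e e0 N.
have FA : (v @ \oo) [set u | exists2 k, (N <= k)%N & u = v k].
  apply: (@filterS nat \oo _ [set k | (N <= k)%N]); last exact: nbhs_infty_ge.
  by move=> k Nk; exists k.
have Bn : nbhs w (ball w e) by exact: nbhsx_ballx.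
have [u [[k Nk ->] bk]] := clw _ _ FA Bn.
exists k; split => // i.
move: bk => /= [_ /(_ ord0 i)].
by [].
Qed.

Lemma approx_eq (R : realType) (x y : R) : (forall e, 0 < e -> `|x - y| < e) -> x = y.
Proof.
move=> h; apply/eqP; apply/negP => /negP hxy.
have := h `|x - y|; rewrite normr_gt0 subr_eq0 hxy ltxx; by move/(_ isT).
Qed.

Lemma vartheta_entry (R : realType) n r (X : 'M[R]_(n, r)) i k :
  Num.max 0 (- X i k) <= vartheta X.
Proof.
rewrite /vartheta (bigD1 i) //= (bigD1 k) //= -addrA lerDl.
apply: addr_ge0; first by apply: sumr_ge0 => l _; have [] := pn_facts (X i l).
by apply: sumr_ge0 => j _; apply: sumr_ge0 => l _; have [] := pn_facts (X j l).
Qed.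

Lemma global_eb (R : realType) n r (f : 'M[R]_(n, r) -> R) (Lf fstar B : R) :
  0 <= Lf -> 0 <= B ->
  (forall X Y, Stiefel R n r X -> Stiefel R n r Y ->
     `|f X - f Y| <= Lf * frob (X - Y)) ->
  (forall X, Stiefel R n r X -> fstar - B <= f X) ->
  (forall X, Splus R n r X -> f X <= fstar -> exists d K, 0 < d /\
     forall Y, Stiefel R n r Y -> (forall i k, `|Y i k - X i k| <= d) ->
       fstar - K * vartheta Y <= f Y) ->
  exists C, 0 <= C /\ forall X, Stiefel R n r X -> fstar - C * vartheta X <= f X.
Proof.
move=> Lf0 B0 hLip hB hloc.
case: (pselect (exists C, 0 <= C /\ forall X, Stiefel R n r X ->
  fstar - C * vartheta X <= f X)) => // hno; exfalso.
have hk : forall k : nat, exists X, Stiefel R n r X /\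
    f X < fstar - k%:R * vartheta X.
  move=> k; case: (pselect (exists X, Stiefel R n r X /\
    f X < fstar - k%:R * vartheta X)) => // hk; exfalso.
  apply: hno; exists k%:R; split; first exact: ler0n.
  move=> X hX; rewrite leNgt; apply/negP => hlt; apply: hk; exists X; split => //.
have [Xk hXk] := choice hk.
pose v k := mxvec (Xk k).
have hv : forall k i, [set` `[(-1:R), 1]] (v k 0 i).
  move=> k i; case/mxvec_indexP: i => a b; rewrite /v mxvecE /= in_itv /=.
  by have := stiefel_entry a b (hXk k).1 => /ler_normlP [h1 h2]; rewrite h2 andbT lerNl.
have [w hw] := seq_cluster hv.
pose X := vec_mx w.
have happ : forall e, 0 < e -> forall N, exists k, (N <= k)%N /\
    forall a b, `|X a b - Xk k a b| < e.
  move=> e e0 N; have [k [Nk hk']] := hw e e0 N; exists k; split => // a b.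
  by have := hk' (mxvec_index a b); rewrite /v mxvecE /X mxE.
have hX1 : forall a b, `|X a b| <= 1.
  move=> a b; apply/ler_addgt0Pr => e e0.
  have [k [_ hk']] := happ e e0 0%N.
  have := hk' a b; have := stiefel_entry a b (hXk k).1.
  have := ler_normD (X a b - Xk k a b) (Xk k a b); rewrite subrK; lra.
have hn : 0 <= n%:R :> R by rewrite ler0n.
have hXSt : Stiefel R n r X.
  apply/matrixP => j l; rewrite tmulE mxE; apply: approx_eq => e e0.
  pose eps := e / (2 * n%:R + 1).
  have heps : eps * (2 * n%:R + 1) = e by rewrite /eps mulfVK //; apply: lt0r_neq0; lra.
  have eps0 : 0 < eps by rewrite /eps divr_gt0 //; lra.
  have [k [_ hk']] := happ eps eps0 0%N.
  have hY := hXk k; rewrite -(stiefel_col j l hY.1) -sumrB.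
  apply: (le_lt_trans (ler_norm_sum _ _ _)).
  apply: (@le_lt_trans _ _ (\sum_(i < n) (2 * eps))).
    apply: ler_sum => i _.
    have h1 := hk' i j; have h2 := hk' i l; have h3 := hX1 i j.
    have h4 := stiefel_entry i l hY.1.
    have -> : X i j * X i l - Xk k i j * Xk k i l =
      X i j * (X i l - Xk k i l) + Xk k i l * (X i j - Xk k i j) by ring.
    apply: (le_trans (ler_normD _ _)); rewrite !normrM.
    have := normr_ge0 (X i l - Xk k i l); have := normr_ge0 (X i j - Xk k i j).
    have := normr_ge0 (X i j); have := normr_ge0 (Xk k i l).
    nra.
  rewrite sum_const_ord; nra.
have hXRp : Rplus R n r X.
  move=> a b; rewrite leNgt; apply/negP => hab.
  pose c := - X a b / 2.
  have c0 : 0 < c by rewrite /c; lra.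
  have hBc : 0 <= B / c by apply: divr_ge0 => //; lra.
  have hb := archi_boundP hBc.
  set N := Num.bound _ in hb.
  have hBN : B < N%:R * c by rewrite -ltr_pdivrMr.
  have [k [Nk hk']] := happ c c0 N.
  have [hYk hfk] := hXk k.
  have hth := vartheta_entry (Xk k) a b.
  have hnegk : c < Num.max 0 (- Xk k a b).
    have := hk' a b => /ltr_normlP /= [h1 h2].
    have [p1 p2 p3 p4 p5] := pn_facts (Xk k a b).
    have hc : c = - X a b / 2 by [].
    lra.
  have hkN : N%:R <= k%:R :> R by rewrite ler_nat.
  have := hB _ hYk.
  have := vartheta_ge0 (Xk k).
  nra.
have hfX : f X <= fstar.
  apply/ler_addgt0Pr => e e0.
  have hnr : 0 <= (n * r)%:R :> R by rewrite ler0n.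
  pose eps := e / (Lf * (n * r)%:R + 1).
  have heps : eps * (Lf * (n * r)%:R + 1) = e.
    by rewrite /eps mulfVK //; apply: lt0r_neq0; nra.
  have eps0 : 0 < eps by rewrite /eps divr_gt0 //; nra.
  have [k [_ hk']] := happ eps eps0 0%N.
  have [hYk hfk] := hXk k.
  have hfr := frob_sub_le (fun a b => ltW (hk' a b)).
  have hL := hLip _ _ hXSt hYk.
  have hL2 : Lf * frob (X - Xk k) <= Lf * ((n * r)%:R * eps) by apply: ler_wpM2l.
  have := vartheta_ge0 (Xk k); have : 0 <= k%:R :> R by rewrite ler0n.
  move: hL => /ler_normlP [hL1 hL3].
  nra.
have [d [K [d0 hK]]] := hloc X (conj hXRp hXSt) hfX.
have hb := archi_boundP (normr_ge0 K).
set N := Num.bound _ in hb.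
have [k [Nk hk']] := happ d d0 N.
have [hYk hfk] := hXk k.
have hKk : fstar - K * vartheta (Xk k) <= f (Xk k).
  by apply: hK => // a b; rewrite distrC; apply: ltW.
have hkN : N%:R <= k%:R :> R by rewrite ler_nat.
have hK1 : K <= `|K| by apply: ler_norm.
have := vartheta_ge0 (Xk k).
nra.
Qed.


Lemma sq_nzr (R : realType) n r (e : n = r) (X : 'M[R]_(n, r)) :
  Stiefel R n r X -> no_zero_rows X.
Proof.
subst r => hX i.
case: (pselect (exists j, X i j != 0)) => // hno; exfalso.
have h0 : forall j, X i j = 0.
  move=> j; apply/eqP; apply/negP => /negP hj; apply: hno; exists j.
  exact: hj.
have := mulmx1C hX; move/matrixP => /(_ i i); rewrite !mxE eqxx /=.
rewrite big1 => [/esym/eqP|j _]; first by rewrite oner_eq0.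
by rewrite mxE h0 mul0r.
Qed.

Lemma vartheta0 (R : realType) n r (X : 'M[R]_(n, r)) :
  Rplus R n r X -> vartheta X = 0.
Proof.
move=> hX; apply: big1 => i _; apply: big1 => k _.
rewrite /Num.Def.maxr oppr_gt0 ltNge hX //.
Qed.

Lemma vartheta0_Rplus (R : realType) n r (X : 'M[R]_(n, r)) :
  vartheta X = 0 -> Rplus R n r X.
Proof.
move=> h i k; have := vartheta_entry X i k; rewrite h.
have [p1 p2 p3 p4 p5] := pn_facts (X i k); lra.
Qed.

Lemma dist_Rplus_le (R : realType) n r (X : 'M[R]_(n, r)) :
  dist X (Rplus R n r) <= vartheta X.
Proof.
pose Xp := \matrix_(i, k) Num.max (X i k) 0.
have hXp : Rplus R n r Xp by move=> i k; rewrite mxE; have [] := pn_facts (X i k).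
apply: (@le_trans _ _ (frob (X - Xp))).
  apply: ge_inf; first by exists 0 => _ [Y _ <-]; apply: frob_ge0.
  by exists Xp.
apply: (le_trans (frob_le_l1 _)); apply: ler_sum => i _; apply: ler_sum => k _.
rewrite !mxE; have [p1 p2 p3 p4 p5] := pn_facts (X i k).
rewrite {1}p3 addrC addKr normrN ger0_norm //.
Qed.

End Helpers.

Theorem theorem3p6 (R : realType) (n r : nat)
  (O : set 'M[R]_(n, r)) (f : 'M[R]_(n, r) -> R) (Lf : R) :
  (1 <= r)%N -> (r <= n)%N ->
  open O -> Stiefel R n r `<=` O ->
  (* f is continuously differentiable on O *)
  (forall X, O X -> differentiable f X) ->
  (forall V : 'M[R]_(n, r), {within O, continuous ('D_V f)}) ->
  (* Lf is a Lipschitz constant of f on St(n,r) *)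
  (forall X Y, Stiefel R n r X -> Stiefel R n r Y ->
     `|f X - f Y| <= Lf * frob (X - Y)) ->
  (* in the case n > r > 1, global minimizers of (P) have no zero rows *)
  ((r < n)%N -> (1 < r)%N ->
     forall X, global_min f (Splus R n r) X -> no_zero_rows X) ->
  let fstar := opt_value f (Splus R n r) in
  (* 1. *)
  ((n = r \/ ((r < n)%N /\ r = 1%N)) ->
     forall kappa' : R, 0 < kappa' ->
     (forall Z, Stiefel R n r Z ->
        dist Z (Splus R n r) <= kappa' * dist Z (Rplus R n r)) ->
     forall X, Stiefel R n r X ->
       0 <= f X - fstar + kappa' * Lf * vartheta X)
  /\
  (* 2. *)
  ((r < n)%N -> (1 < r)%N ->
     forall Xs, global_min f (Splus R n r) Xs ->
     let kappa := (21 / 10) * Num.sqrt (r%:R) * (1 + 3 * r%:R * (n - r)%:R)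
                  / min_nonzero_entry Xs in
     exists delta : R, 0 < delta /\
       forall eps : R, 0 <= eps ->
       forall X, frob (X - Xs) <= delta ->
         Stiefel R n r X -> vartheta X = eps ->
         0 <= f X - fstar + kappa * Lf * vartheta X)
  /\
  (* consequence: exact penalty *)
  (exists rhobar : R, 0 < rhobar /\
     forall rho : R, rhobar <= rho ->
     forall X, global_min (fun Y => f Y + rho * vartheta Y) (Stiefel R n r) X
               <-> global_min f (Splus R n r) X).
Proof.
move=> r1 rn _ _ _ _ hLip hnzr fstar.
have n0 : (0 < n)%N by apply: leq_trans rn.
have hX0 := X0_splus R rn.
pose j0 : 'I_r := Ordinal r1.
pose i0 : 'I_n := widen_ord rn j0.
have Lf0 : 0 <= Lf.
  have h := hLip _ _ hX0.2 (stiefelN hX0.2).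
  have hfr := entry_le_frob (X0 R n r - - X0 R n r) i0 j0.
  rewrite !mxE /= opprK in hfr.
  have : 0 < frob (X0 R n r - - X0 R n r) by apply: lt_le_trans hfr; rewrite normr_gt0.
  move=> hpos; rewrite -(pmulr_lge0 _ hpos); exact: le_trans h.
pose B := Lf * ((n * r)%:R * 2).
have B0 : 0 <= B by rewrite /B; apply: mulr_ge0 => //; apply: mulr_ge0; rewrite ?ler0n.
have hSS : forall X Y, Stiefel R n r X -> Stiefel R n r Y -> `|f X - f Y| <= B.
  move=> X Y hX hY; apply: (le_trans (hLip _ _ hX hY)); apply: ler_wpM2l => //.
  apply: frob_sub_le => i k; apply: (le_trans (ler_normB _ _)).
  by have := stiefel_entry i k hX; have := stiefel_entry i k hY; lra.
have hfl : forall Y, Stiefel R n r Y -> f (X0 R n r) - B <= f Y.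
  by move=> Y hY; have := hSS _ _ hX0.2 hY => /ler_normlP [h1 h2]; lra.
have hlb : has_lbound [set f Y | Y in Splus R n r].
  by exists (f (X0 R n r) - B) => _ [Y hY <-]; apply: hfl; case: hY.
have hfs : forall Y, Splus R n r Y -> fstar <= f Y.
  by move=> Y hY; apply: (ge_inf hlb); exists Y.
have hfs0 : fstar <= f (X0 R n r) by apply: hfs.
have hfsB : forall X, Stiefel R n r X -> fstar - B <= f X.
  by move=> X hX; have := hSS _ _ hX0.2 hX => /ler_normlP [h1 h2]; lra.
have hnear : forall X Y t, Stiefel R n r X -> Splus R n r Y -> frob (X - Y) <= t ->
    fstar - Lf * t <= f X.
  move=> X Y t hX hY ht; have := hLip _ _ hX hY.2 => /ler_normlP [h1 h2].
  have := hfs _ hY; have : Lf * frob (X - Y) <= Lf * t by apply: ler_wpM2l.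
  lra.
split.
  move=> _ kp kp0 hdist X hX.
  suff : fstar - kp * Lf * vartheta X <= f X by lra.
  apply/ler_addgt0Pr => e e0.
  pose e' := e / (Lf + 1).
  have he' : e' * (Lf + 1) = e by rewrite /e' mulfVK //; apply: lt0r_neq0; lra.
  have e'0 : 0 < e' by rewrite /e' divr_gt0 //; lra.
  have hne : [set frob (X - Y) | Y in Splus R n r] !=set0.
    by exists (frob (X - X0 R n r)), (X0 R n r).
  have hinf : has_inf [set frob (X - Y) | Y in Splus R n r].
    by split => //; exists 0 => _ [Y _ <-]; apply: frob_ge0.
  have [_ [Y hY <-] hYlt] := inf_adherent e'0 hinf.
  have hd := hdist X hX; have hdr := dist_Rplus_le X.
  have : frob (X - Y) <= kp * vartheta X + e'.
    rewrite /dist in hd hdr.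
    have : kp * dist X (Rplus R n r) <= kp * vartheta X by apply: ler_wpM2l => //; lra.
    rewrite /dist; lra.
  move=> hb; have := hnear _ _ _ hX hY hb.
  have : Lf * e' <= e by nra.
  nra.
split.
  move=> rn' r1' Xs hXs kappa.
  have [m0 [m1 [d [d0 hloc]]]] := loc_nz n0 hXs.1 (hnzr rn' r1' Xs hXs).
  exists d; split => // eps _ X hXd hX _.
  have hent : forall i k, `|X i k - Xs i k| <= d.
    move=> i k; apply: le_trans hXd; have := entry_le_frob (X - Xs) i k.
    by rewrite !mxE.
  have [Y [hY hYb]] := hloc X hX hent.
  set m := min_nonzero_entry Xs in m0 m1 hYb.
  have hkm : 4 <= kappa * m.
    rewrite /kappa mulfVK; last by apply: lt0r_neq0.
    have hs : 1 <= Num.sqrt (r%:R : R).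
      have h1 : 1 <= r%:R :> R by rewrite ler1n.
      have h2 := sqr_sqrtr (ler0n R r); have h3 := sqrtr_ge0 (r%:R : R).
      rewrite expr2 in h2; set s := Num.sqrt _ in h2 h3 *.
      rewrite leNgt; apply/negP => hs1.
      have : s * s <= s * 1 by apply: ler_wpM2l => //; apply: ltW.
      lra.
    have hr2 : 2 <= r%:R :> R by rewrite ler_nat.
    have hnr : 1 <= (n - r)%:R :> R by rewrite ler1n subn_gt0.
    have : 7 <= 1 + 3 * r%:R * (n - r)%:R :> R by nra.
    nra.
  have hth := vartheta_ge0 X.
  have hfb : frob (X - Y) <= kappa * vartheta X.
    have := frob_ge0 (X - Y); nra.
  have := hnear _ _ _ hX hY hfb.
  nra.
have hloc : forall X, Splus R n r X -> f X <= fstar -> exists d K, 0 < d /\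
     forall Y, Stiefel R n r Y -> (forall i k, `|Y i k - X i k| <= d) ->
       fstar - K * vartheta Y <= f Y.
  move=> X hX hfX.
  have hgm : global_min f (Splus R n r) X.
    by split => // Y hY; apply: le_trans hfX _; apply: hfs.
  case: (eqVneq r 1%N) => [r1e|r1n].
    have [d [d0 hd]] := loc_r1 n0 r1e hX.
    exists d, (Lf * (11/10)); split => // Y hY hYd.
    have [Z [hZ hZb]] := hd Y hY hYd.
    by have := hnear _ _ _ hY hZ hZb; rewrite mulrA.
  have hnz : no_zero_rows X.
    have : (1 < r)%N by rewrite ltn_neqAle eq_sym r1n r1.
    move=> r1'; case: (ltngtP r n) => [rn'|nr'|nr].
    - exact: hnzr rn' r1' X hgm.
    - by move: nr'; rewrite ltnNge rn.
    - by apply: (sq_nzr (esym nr)); case: hX.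
  have [m0 [m1 [d [d0 hd]]]] := loc_nz n0 hX hnz.
  exists d, (Lf * (4 / min_nonzero_entry X)); split => // Y hY hYd.
  have [Z [hZ hZb]] := hd Y hY hYd.
  have hZb' : frob (Y - Z) <= 4 / min_nonzero_entry X * vartheta Y.
    by rewrite mulrAC ler_pdivlMr // mulrC.
  by have := hnear _ _ _ hY hZ hZb'; rewrite mulrA.
have [C [C0 hC]] := global_eb Lf0 B0 hLip hfsB hloc.
exists (C + 1); split; first lra.
move=> rho hrho X; split.
  move=> [hX hmin].
  have hle : f X + rho * vartheta X <= fstar.
    apply: lb_le_inf; first by exists (f (X0 R n r)), (X0 R n r).
    move=> _ [Y hY <-]; have := hmin Y hY.2.
    by rewrite (vartheta0 hY.1) mulr0 addr0.
  have := hC X hX; have := vartheta_ge0 X => hth hCX.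
  have hth0 : vartheta X = 0 by nra.
  have hXp : Splus R n r X by split => //; apply: vartheta0_Rplus.
  split => // Y hY; have := hmin Y hY.2.
  by rewrite hth0 (vartheta0 hY.1) !mulr0 !addr0.
move=> [hX hmin]; split; first by case: hX.
move=> Y hY; rewrite (vartheta0 hX.1) mulr0 addr0.
have : f X <= fstar.
  apply: lb_le_inf; first by exists (f (X0 R n r)), (X0 R n r).
  by move=> _ [Z hZ <-]; apply: hmin.
have := hC Y hY; have := vartheta_ge0 Y; nra.
Qed.
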